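(* Let $m\ge 1$ and let $t_1,\dots,t_m$ be real numbers with $0<t_i\le 1$ for all $i\in\{1,\dots,m\}$. Then $$\sum_{i=1}^{m}\frac{1-t_i}{t_i}\;\ge\;\sum_{i=1}^{m}\frac{t_i(1-t_i)}{\left(\frac{1}{m}\sum_{j=1}^{m}t_j\right)^{2}}.$$ *)

(* Defs.v *)
From mathcomp Require Import all_boot all_order all_algebra.

(* Main.v *)
Require Import Defs.
From mathcomp Require Import all_boot all_order all_algebra.
From mathcomp Require Import ring lra.
Import Order.TTheory GRing.Theory Num.Theory.
Local Open Scope ring_scope.

Lemma term_ineq (R : realFieldType) (x a : R) : 0 < x -> 0 < a ->
  (2 / a - 2 / a ^+ 2) * (x - a) <= (1 - x) / x - x * (1 - x) / a ^+ 2.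
Proof.
move=> hx ha; rewrite -subr_ge0.
have -> : (1 - x) / x - x * (1 - x) / a ^+ 2 - (2 / a - 2 / a ^+ 2) * (x - a)
  = (x - a) ^+ 2 / a ^+ 2 + (x - a) ^+ 2 / (x * a ^+ 2).
  by field; rewrite ?mulf_neq0 ?expf_neq0 ?gt_eqF.
by apply: addr_ge0; apply: divr_ge0; rewrite ?sqr_ge0 ?mulr_ge0 ?ltW ?exprn_gt0.
Qed.

Theorem lemma3p2 (R : realFieldType) (m : nat) (t : 'I_m -> R)
  (hm : (1 <= m)%N) (ht : forall i, 0 < t i /\ t i <= 1) :
  \sum_(i < m) (1 - t i) / t i >=
  \sum_(i < m) t i * (1 - t i) / ((m%:R)^-1 * \sum_(j < m) t j) ^+ 2.
Proof.
set S := \sum_(j < m) t j.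
set a := (m%:R)^-1 * S.
have hm0 : (0 : R) < m%:R by rewrite ltr0n.
have hS : 0 < S.
  case: m hm t ht @S {a hm0} => // n _ t ht.
  rewrite /= big_ord_recl; apply: ltr_pwDl; first exact: (ht ord0).1.
  by apply: sumr_ge0 => i _; exact: ltW (ht _).1.
have ha : 0 < a by rewrite /a mulr_gt0 // invr_gt0.
rewrite -subr_ge0 -sumrB.
set c := 2 / a - 2 / a ^+ 2.
apply: (@le_trans _ _ (\sum_(i < m) c * (t i - a))); last first.
  by apply: ler_sum => i _; apply: term_ineq => //; exact: (ht i).1.
rewrite -mulr_sumr sumrB sumr_const card_ord -mulr_natr /a.
by rewrite mulrAC mulVf ?gt_eqF // mul1r subrr mulr0.
Qed.
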